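(* Let $F(u,v)=\sum_{p,q\geq1}F_{p,q}(t)u^pv^q=\sum_{n\geq1}f_n(u,v)t^n$, where $F_{p,q}(t)=\sum_{n\geq1}|\{e\in\mathbf{I}_n(\mathcal{AW}): e\text{ has parameters }(p,q)\}|\,t^n$. Then $$F(u,v)=tuv+\frac{tuv}{v-u}\bigl(F(v,1)-F(u,1)\bigr)+\frac{tuv}{1-u}\bigl(F(u,1)-F(u,u)\bigr).$$ Equivalently, $f_1(u,v)=uv$ and for $n\geq2$, $$f_n(u,v)=\frac{uv}{v-u}\bigl(f_{n-1}(v,1)-f_{n-1}(u,1)\bigr)+\frac{uv}{1-u}\bigl(f_{n-1}(u,1)-f_{n-1}(u,u)\bigr).$$
   Context: $\mathbf{I}_n$ is the set of inversion sequences $e=(e_1,\ldots,e_n)$ with $0\leq e_i<i$. $\mathbf{I}_n(\mathcal{AW})$ is the set of $e\in\mathbf{I}_n$ such that $e_i\leq\max\{e_{i-2},e_{i-1}\}+1$ for every $2<i\leq n$. The parameters of $e\in\mathbf{I}_n(\mathcal{AW})$ are $(p,q)$ with $p=e_n+1$ and $q=\max\{e_{n-1},e_n\}+1-e_n$, using the convention $e_0=0$. Each $f_n(u,v)$ is a polynomial in $u,v$. *)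

(* Defs.v *)
From HB Require Import structures.
From mathcomp Require Import all_boot all_order all_algebra.
Set Implicit Arguments. Unset Strict Implicit. Unset Printing Implicit Defensive.
Import Order.TTheory GRing.Theory Num.Theory.

(* An element of I_n is encoded as e : {ffun 'I_n -> 'I_n} with the
   (0-indexed) entry e j standing for e_{j+1}; the constraint 0 <= e_i < i
   becomes e j <= j. *)

(* 1-indexed access with the convention e_0 = 0 *)
Definition ent (n : nat) (e : {ffun 'I_n -> 'I_n}) (k : nat) : nat :=
  if k is k'.+1 then nth 0 [seq val (e i) | i <- enum 'I_n] k' else 0.

Definition is_inv_seq (n : nat) (e : {ffun 'I_n -> 'I_n}) : bool :=
  [forall j : 'I_n, val (e j) <= val j].

Definition is_AW (n : nat) (e : {ffun 'I_n -> 'I_n}) : bool :=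
  is_inv_seq e &&
  [forall i : 'I_n.+1, (2 < i) ==>
     (ent e i <= maxn (ent e i.-2) (ent e i.-1) + 1)].

Definition par_p (n : nat) (e : {ffun 'I_n -> 'I_n}) : nat := ent e n + 1.
Definition par_q (n : nat) (e : {ffun 'I_n -> 'I_n}) : nat :=
  maxn (ent e n.-1) (ent e n) + 1 - ent e n.

Definition fAW (R : fieldType) (n : nat) (u v : R) : R :=
  (\sum_(e : {ffun 'I_n -> 'I_n} | is_AW e) u ^+ par_p e * v ^+ par_q e)%R.

(* Main.v *)
Require Import Defs.
From mathcomp Require Import all_boot all_order all_algebra.
From mathcomp Require Import zify ring.
Set Implicit Arguments. Unset Strict Implicit. Unset Printing Implicit Defensive.
Import Order.TTheory GRing.Theory Num.Theory.

Definition E (t : seq nat) (k : nat) : nat := if k is k'.+1 then nth 0 t k' else 0.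
Definition awp (t : seq nat) : bool :=
  all (fun j => nth 0 t j <= j) (iota 0 (size t)) &&
  all (fun i => (2 < i) ==> (E t i <= maxn (E t i.-2) (E t i.-1) + 1)) (iota 0 (size t).+1).
Definition bnd (s : seq nat) : nat :=
  if s is [::] then 1 else (maxn (E s (size s).-1) (E s (size s))).+2.
Fixpoint aw n : seq (seq nat) :=
  if n is n'.+1 then [seq rcons s x | s <- aw n', x <- iota 0 (bnd s)] else [:: [::]].

Lemma E_rcons s x k : k <= size s -> E (rcons s x) k = E s k.
Proof. case: k => //= k lt; rewrite nth_rcons lt //. Qed.
Lemma E_rcons_last s x : E (rcons s x) (size s).+1 = x.
Proof. by rewrite /= nth_rcons ltnn eqxx. Qed.

Lemma A_E s k : all (fun j => nth 0 s j <= j) (iota 0 (size s)) -> k <= size s -> E s k <= k.-1.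
Proof.
move=> /allP H; case: k => //= k lt; apply: H; rewrite mem_iota; lia.
Qed.

Lemma iotaSr n : iota 0 n.+1 = iota 0 n ++ [:: n].
Proof. by rewrite -addn1 iotaD. Qed.

Lemma awp_rcons s x : awp (rcons s x) = awp s && (x < bnd s).
Proof.
rewrite /awp size_rcons (iotaSr (size s)) (iotaSr (size s).+1) !all_cat !all_seq1.
have -> : all (fun j => nth 0 (rcons s x) j <= j) (iota 0 (size s)) =
          all (fun j => nth 0 s j <= j) (iota 0 (size s)).
  apply: eq_in_all => j; rewrite mem_iota /= => lt; by rewrite nth_rcons lt.
have -> : all (fun i => (2 < i) ==> (E (rcons s x) i <= maxn (E (rcons s x) i.-2) (E (rcons s x) i.-1) + 1)) (iota 0 (size s).+1) =
  all (fun i => (2 < i) ==> (E s i <= maxn (E s i.-2) (E s i.-1) + 1)) (iota 0 (size s).+1).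
  apply: eq_in_all => j; rewrite mem_iota /= => lt.
  rewrite !E_rcons //; lia.
rewrite (iotaSr (size s)) all_cat all_seq1.
rewrite nth_rcons ltnn eqxx E_rcons_last /= !E_rcons; try lia.
set A := all _ (iota 0 (size s)).
set B := all _ (iota 0 (size s)).
case: (boolP A) => HA; last by [].
case: B => //=.
case: (boolP (_ ==> _)) => //= _.
rewrite /A in HA; clear A.
have h1 := A_E HA (leqnn _).
have h2 := A_E HA (leq_pred (size s)).
case: s HA h1 h2 => [|y s] HA h1 h2 /=; first lia.
have h3 := A_E HA (isT : 1 <= size (y :: s)).
move: h1 h2 h3; rewrite /bnd /= => h1 h2 h3.
case: s HA h1 h2 h3 => [|z s] HA h1 h2 h3 /=; first (apply/idP/idP; lia).
move: h1 h2; rewrite /= => h1 h2.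
apply/idP/idP; lia.
all: by rewrite andbF.
Qed.

Lemma mem_aw n t : (t \in aw n) = awp t && (size t == n).
Proof.
elim: n t => [|n IH] t.
  by case: t => [|y s]; rewrite inE ?andbF.
apply/allpairsPdep/idP.
  move=> [s [x [Hs Hx ->]]]; move: Hs; rewrite IH => /andP[Hs /eqP Hz].
  by rewrite awp_rcons size_rcons Hs Hz eqxx -(mem_iota 0) Hx.
case/lastP: t => [|s x]; first by rewrite andbF.
rewrite awp_rcons size_rcons eqSS => /andP[/andP[Hs Hx] Hz].
exists s, x; split => //; first by rewrite IH Hs.
by rewrite mem_iota.
Qed.

Lemma uniq_aw n : uniq (aw n).
Proof.
elim: n => [|n IH] //=.
apply: allpairs_uniq_dep => //; first by move=> *; apply: iota_uniq.
by move=> [s1 x1] [s2 x2] _ _ /= /rcons_inj [-> ->].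
Qed.

Definition g n (e : {ffun 'I_n -> 'I_n}) : seq nat := [seq val (e i) | i <- enum 'I_n].

Lemma g_nth n (e : {ffun 'I_n -> 'I_n}) (i : 'I_n) : nth 0 (g e) i = val (e i).
Proof. by rewrite /g (nth_map i) ?size_enum_ord // nth_ord_enum. Qed.

Lemma size_g n (e : {ffun 'I_n -> 'I_n}) : size (g e) = n.
Proof. by rewrite size_map size_enum_ord. Qed.

Lemma g_inj n : injective (@g n).
Proof.
move=> e1 e2 H; apply/ffunP => i; apply: val_inj; by rewrite /= -!g_nth H.
Qed.

Lemma is_AW_awp n (e : {ffun 'I_n -> 'I_n}) : is_AW e = awp (g e).
Proof.
rewrite /is_AW /is_inv_seq /awp size_g; congr andb.
  apply/forallP/allP => H j.
    rewrite mem_iota add0n => lt; have := H (Ordinal lt); by rewrite -g_nth.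
  by have := H j; rewrite mem_iota add0n ltn_ord g_nth => /(_ isT).
apply/forallP/allP => H j.
  rewrite mem_iota add0n => lt; exact: (H (Ordinal lt)).
by have := H j; rewrite mem_iota add0n ltn_ord => /(_ isT).
Qed.

Definition W (R : fieldType) n (u v : R) (t : seq nat) : R :=
  (u ^+ (E t n + 1) * v ^+ (maxn (E t n.-1) (E t n) + 1 - E t n))%R.

Lemma fAW_sum (R : fieldType) n (u v : R) : fAW n u v = (\sum_(t <- aw n) W n u v t)%R.
Proof.
rewrite /fAW.
transitivity (\sum_(e in [pred e | is_AW e]) W n u v (@g n e))%R; first by [].
rewrite -big_image; apply: perm_big; apply: uniq_perm.
- by rewrite map_inj_uniq ?enum_uniq //; apply: g_inj.
- exact: uniq_aw.
move=> t; rewrite mem_aw; apply/mapP/idP.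
  move=> [e]; rewrite mem_enum inE is_AW_awp => He ->.
  by rewrite He /g size_map size_enum_ord eqxx.
move=> /andP[Ht /eqP Hz].
have Hb : forall i : 'I_n, nth 0 t i < n.
  move=> i; case/andP: Ht => /allP H _.
  have := H i; rewrite mem_iota add0n Hz ltn_ord => /(_ isT) h.
  exact: leq_ltn_trans h (ltn_ord i).
have Hg : g [ffun i : 'I_n => insubd i (nth 0 t i)] = t.
  apply: (@eq_from_nth _ 0); first by rewrite /g size_map size_enum_ord Hz.
  move=> i; rewrite {1}/g size_map size_enum_ord => lt.
  by rewrite (g_nth _ (Ordinal lt)) ffunE val_insubd Hb.
exists [ffun i : 'I_n => insubd i (nth 0 t i)] => //.
by rewrite mem_enum inE is_AW_awp Hg.
Qed.

Local Open Scope ring_scope.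

Lemma SA (R : fieldType) (u v : R) k :
  (v - u) * \sum_(x <- iota 0 k) u ^+ (x + 1) * v ^+ (k - x) = u * v * (v ^+ k - u ^+ k).
Proof.
elim: k => [|k IH]; first by rewrite big_nil expr0 subrr !mulr0.
rewrite iotaSr big_cat big_seq1 /=.
rewrite (eq_big_seq (fun x => v * (u ^+ (x + 1) * v ^+ (k - x)))); last first.
  move=> x; rewrite mem_iota add0n => lt; rewrite subSn; last lia.
  rewrite exprS; ring.
rewrite -mulr_sumr mulrDr mulrCA IH subSnn !exprS addn1 exprS; ring.
Qed.

Lemma SB (R : fieldType) (u v : R) j k :
  (1 - u) * \sum_(x <- iota j k) u ^+ (x + 1) * v = u * v * (u ^+ j - u ^+ (j + k)).
Proof.
elim: k => [|k IH]; first by rewrite big_nil addn0 subrr !mulr0.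
rewrite -addn1 iotaD big_cat /= big_seq1 mulrDr IH addnA !addn1 !exprS; ring.
Qed.

Lemma key (R : fieldType) (u v : R) a M : (a <= M)%N -> v != u -> u != 1 ->
  \sum_(x <- iota 0 M.+2) u ^+ (x + 1) * v ^+ (maxn a x + 1 - x) =
  u * v / (v - u) * (v ^+ (a + 1) - u ^+ (a + 1)) +
  u * v / (1 - u) * (u ^+ (a + 1) - u ^+ (M + 2)).
Proof.
move=> aM vu u1.
rewrite (_ : iota 0 M.+2 = iota 0 (a + 1) ++ iota (a + 1) (M + 1 - a)); last first.
  by rewrite -iotaD; congr iota; lia.
rewrite big_cat /=.
have vu0 : v - u != 0 by rewrite subr_eq0.
have u10 : 1 - u != 0 by rewrite subr_eq0 eq_sym.
congr (_ + _).
  rewrite (eq_big_seq (fun x => u ^+ (x + 1) * v ^+ (a + 1 - x))); last first.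
    move=> x; rewrite mem_iota add0n => lt.
    by rewrite (_ : maxn a x = a) //; lia.
  apply: (mulfI vu0); rewrite SA; field; exact: vu0.
rewrite (eq_big_seq (fun x => u ^+ (x + 1) * v)); last first.
  move=> x; rewrite mem_iota => /andP[lt _].
  by rewrite (_ : maxn a x + 1 - x = 1)%N ?expr1 //; lia.
apply: (mulfI u10); rewrite SB (_ : (a + 1 + (M + 1 - a) = M + 2)%N); last lia.
field; exact: u10.
Qed.

Lemma pw (R : fieldType) (u v : R) m s : size s = m.+1 -> v != u -> u != 1 ->
  \sum_(x <- iota 0 (bnd s)) W m.+2 u v (rcons s x) =
  u * v / (v - u) * (W m.+1 v 1 s - W m.+1 u 1 s)
  + u * v / (1 - u) * (W m.+1 u 1 s - W m.+1 u u s).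
Proof.
move=> Hz vu u1.
have -> : bnd s = (maxn (E s m) (E s m.+1)).+2 by case: s Hz => // y s' [<-].
rewrite (eq_big_seq (fun x => u ^+ (x + 1) * v ^+ (maxn (E s m.+1) x + 1 - x))); last first.
  move=> x _.
  have e1 : E (rcons s x) m.+2 = x by rewrite -Hz E_rcons_last.
  have e2 : E (rcons s x) m.+1 = E s m.+1 by rewrite E_rcons // Hz.
  by rewrite /W e1 -[(m.+2).-1]/(m.+1) e2.
rewrite (key (leq_maxr (E s m) (E s m.+1)) vu u1).
rewrite /W -[(m.+1).-1]/m !expr1n !mulr1 -exprD.
have := leq_maxr (E s m) (E s m.+1) => le.
by rewrite (_ : (E s m.+1 + 1 + (maxn (E s m) (E s m.+1) + 1 - E s m.+1) = maxn (E s m) (E s m.+1) + 2)%N); last lia.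
Qed.

Theorem proposition5p2 (R : fieldType) :
  (forall u v : R, fAW 1 u v = u * v) /\
  (forall (n : nat) (u v : R), (2 <= n)%N -> v != u -> u != 1 ->
     fAW n u v =
       u * v / (v - u) * (fAW n.-1 v 1 - fAW n.-1 u 1)
     + u * v / (1 - u) * (fAW n.-1 u 1 - fAW n.-1 u u)).
Proof.
split.
  move=> u v; rewrite fAW_sum /= big_cons big_nil /W /= addr0.
  by rewrite !expr1.
case=> [|[|m]] // u v _ vu u1.
rewrite -[(m.+2).-1]/(m.+1) !fAW_sum [aw m.+2]/= big_allpairs_dep.
rewrite -!sumrB !mulr_sumr -big_split /=.
apply: eq_big_seq => s.
move=> Hs; have : s \in aw m.+1 by [].
rewrite mem_aw => /andP[_ /eqP Hz].
exact: pw.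
Qed.
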